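(* Consider a SOCO problem with decision space $F=[x_L,x_H]$ and a sequence of discrete systems, indexed by $i$, whose state spacings $\delta_i$ tend to $0$ and each of which has $[x_1,x_m]=F$. Let $x_i=(x_i^t)_t$ denote the output of DRBG($N$) in the $i$-th discrete system and $\hat x=(\hat x^t)_t$ the output of RBG($N$) in the continuous system, all using the same random number $r$. Then with probability $1$, for all $t$, $\lim_{i\to\infty}|x_i^t-\hat x^t|=0$.
   Context: $F=[x_L,x_H]\subseteq\mathbb{R}^+$; $\|\cdot\|$ a norm on $\mathbb{R}$; $\theta\ge1$, $N(\cdot)=\theta\|\cdot\|$; cost functions $c^t:F\to\mathbb{R}^+$ convex (finite on $F$) with uniformly bounded subgradients. A discrete system is a set of states $M=\{x_1<\dots<x_m\}\subseteq F$ with equal spacing $\delta=x_{k+1}-x_k$, $x_1=x_L$, $x_m=x_H$, using the restrictions of $c^t$ to $M$. RBG($N$): $w^0(x)=N(x)$, $w^t(x)=\min_{y\in F}\{w^{t-1}(y)+c^t(y)+N(x-y)\}$, draw $r$ uniformly from $(-1,1)$, and at time $t$ choose $x^t\in F$ minimizing $Y^t(x)=w^{t-1}(x)+rN(x)$. DRBG($N$) is identical with $F$ replaced by $M$ both in the work function minimization and in the choice of $x^t$. Probability is over $r$. *)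

(* Defs.v *)
From HB Require Import structures.
From mathcomp Require Import all_boot all_order all_algebra.
From mathcomp Require Import all_classical all_reals all_analysis.
Set Implicit Arguments. Unset Strict Implicit. Unset Printing Implicit Defensive.
Import Order.TTheory GRing.Theory Num.Theory.
Import numFieldNormedType.Exports.
Local Open Scope classical_set_scope.
Local Open Scope ring_scope.

Definition is_norm (R : realType) (nrm : R -> R) : Prop :=
  [/\ forall x, 0 <= nrm x,
      forall x, nrm x = 0 -> x = 0,
      forall a x, nrm (a * x) = `|a| * nrm x &
      forall x y, nrm (x + y) <= nrm x + nrm y].

Definition Fset (R : realType) (xL xH : R) : set R := [set x | xL <= x <= xH].

Definition convex_on (R : realType) (S : set R) (f : R -> R) : Prop :=
  forall x y l, S x -> S y -> 0 <= l <= 1 ->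
    f (l * x + (1 - l) * y) <= l * f x + (1 - l) * f y.

Definition unif_bounded_subgrad (R : realType) (S : set R) (c : nat -> R -> R) : Prop :=
  exists G : R, forall t x, S x ->
    exists g : R, `|g| <= G /\ forall y, S y -> c t x + g * (y - x) <= c t y.

(* Spacing of the discrete system with m equally spaced states x_1 = xL, x_m = xH. *)
Definition spacing (R : realType) (xL xH : R) (m : nat) : R :=
  (xH - xL) / (m.-1)%:R.

(* The state set M = {x_1 < ... < x_m}, x_k = xL + (k-1) * delta. *)
Definition grid (R : realType) (xL xH : R) (m : nat) : set R :=
  [set xL + k%:R * spacing xL xH m | k in [set k : nat | (k < m)%N]].

(* Work function of RBG(N)/DRBG(N) over the state set S:
   w^0(x) = N(x), w^t(x) = min_{y in S} { w^{t-1}(y) + c^t(y) + N(x - y) }.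
   (All terms are nonnegative and the minimum is attained, so inf = min.) *)
Fixpoint work (R : realType) (S : set R) (N : R -> R) (c : nat -> R -> R) (t : nat)
  : R -> R :=
  match t with
  | 0 => N
  | t'.+1 => fun x =>
      inf [set work S N c t' y + c t y + N (x - y) | y in S]
  end.

(* x is a valid choice of x^t (t >= 1) of the algorithm over S with random number r:
   x in S minimizes Y^t(z) = w^{t-1}(z) + r N(z) over S. *)
Definition is_output (R : realType) (S : set R) (N : R -> R) (c : nat -> R -> R)
  (r : R) (t : nat) (x : R) : Prop :=
  S x /\ forall z, S z ->
    work S N c t.-1 x + r * N x <= work S N c t.-1 z + r * N z.

(* Main.v *)
Require Import Defs.
From HB Require Import structures.
From mathcomp Require Import all_boot all_order all_algebra.
From mathcomp Require Import all_classical all_reals all_analysis.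
From mathcomp Require Import ring lra.
Import Order.TTheory GRing.Theory Num.Theory.
Import numFieldNormedType.Exports.
Local Open Scope classical_set_scope.
Local Open Scope ring_scope.
Section S.
Variable R : realType.

Lemma inf_ge0 (E : set R) : (forall x, E x -> 0 <= x) -> 0 <= inf E.
Proof.
move=> h; have [ne|e] := pselect (E !=set0).
  by apply: lb_le_inf.
have -> : E = set0 by apply/seteqP; split=> x // Ex; apply: e; exists x.
by rewrite inf0.
Qed.

Lemma inf_le_elt (E : set R) x : (forall y, E y -> 0 <= y) -> E x -> inf E <= x.
Proof. by move=> h Ex; apply: ge_inf => //; exists 0. Qed.

Variables (nrm : R -> R) (theta : R).
Hypothesis hn : is_norm nrm.
Hypothesis ht : 1 <= theta.

Lemma nrmE x : nrm x = `|x| * nrm 1.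
Proof. by case: hn => _ _ h _; rewrite -h mulr1. Qed.

Lemma nrm1_gt0 : 0 < nrm 1.
Proof.
case: hn => h0 h1 _ _; rewrite lt_neqAle h0 andbT; apply/eqP => /esym /h1.
by move/eqP; rewrite oner_eq0.
Qed.

Lemma N_lip x y : theta * nrm x <= theta * nrm y + theta * nrm 1 * `|x - y|.
Proof.
case: hn => _ _ _ htri.
have := htri y (x - y); rewrite addrC subrK => h.
rewrite -mulrA (mulrC (nrm 1)) -nrmE -mulrDr ler_wpM2l //; exact: le_trans ler01 ht.
Qed.

Lemma N_lip_abs x y : `|theta * nrm x - theta * nrm y| <= theta * nrm 1 * `|x - y|.
Proof.
have := N_lip x y; have := N_lip y x; rewrite distrC => h1 h2.
rewrite ler_norml; apply/andP; split; lra.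
Qed.
Variables (xL xH : R) (c : nat -> R -> R).
Hypothesis hc0 : forall t x, Fset xL xH x -> 0 <= c t x.
Local Notation N := (fun x => theta * nrm x).
Local Notation a := (theta * nrm 1).

Lemma theta_ge0 : 0 <= theta. Proof. exact: le_trans ler01 ht. Qed.
Lemma N_ge0 x : 0 <= N x.
Proof. by case: hn => h0 _ _ _; rewrite mulr_ge0 // theta_ge0. Qed.
Lemma a_ge0 : 0 <= a. Proof. by rewrite mulr_ge0 // ?theta_ge0 // ltW // nrm1_gt0. Qed.

Lemma workS S t x : work S N c t.+1 x =
  inf [set work S N c t y + c t.+1 y + N (x - y) | y in S].
Proof. by []. Qed.

Lemma work_ge0 S t x : S `<=` Fset xL xH -> 0 <= work S N c t x.
Proof.
move=> SF; elim: t x => [|t IH] x; first exact: N_ge0.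
rewrite workS; apply: inf_ge0 => _ [y Sy <-].
by apply: addr_ge0; [apply: addr_ge0; [exact: IH|exact: hc0 (SF _ Sy)]|exact: N_ge0].
Qed.

Lemma work_elt S t x y : S `<=` Fset xL xH -> S y ->
  work S N c t.+1 x <= work S N c t y + c t.+1 y + N (x - y).
Proof.
move=> SF Sy; rewrite workS; apply: inf_le_elt; last by exists y.
by move=> _ [z Sz <-]; apply: addr_ge0; [apply: addr_ge0; [exact: work_ge0|exact: hc0 (SF _ Sz)]|exact: N_ge0].
Qed.

Lemma work_lip S t x x' : S `<=` Fset xL xH ->
  work S N c t x <= work S N c t x' + a * `|x - x'|.
Proof.
move=> SF; case: t => [|t]; first exact: N_lip.
have [ne|e] := pselect (S !=set0); last first.
  have -> : S = set0 by apply/seteqP; split=> z // Sz; apply: e; exists z.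
  rewrite !workS !image_set0 inf0 add0r; apply: mulr_ge0 => //; exact: a_ge0.
rewrite -lerBlDr workS; apply: lb_le_inf.
  by case: ne => y Sy; exists (work S N c t y + c t.+1 y + N (x' - y)); exists y.
move=> _ [y Sy <-]; rewrite lerBlDr.
apply: (le_trans (@work_elt S t x y SF Sy)).
have := N_lip (x - y) (x' - y).
have -> : x - y - (x' - y) = x - x' by rewrite opprB addrA subrK.
move=> h; rewrite -!addrA lerD2l lerD2l; exact: h.
Qed.
Hypothesis hLH : xL < xH.

Lemma F_xL : Fset xL xH xL.
Proof. by rewrite /Fset /= lexx ltW. Qed.

Lemma c_lip : unif_bounded_subgrad (Fset xL xH) c -> exists G, 0 <= G /\
  forall t x y, Fset xL xH x -> Fset xL xH y -> c t x <= c t y + G * `|x - y|.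
Proof.
move=> [G hG]; exists G; split.
  by have [g [hg _]] := hG 0%N xL F_xL; exact: le_trans (normr_ge0 g) hg.
move=> t x y Fx Fy; have [g [hg hs]] := hG t x Fx.
have := hs y Fy; have : - (g * (y - x)) <= G * `|x - y|.
  rewrite distrC; apply: le_trans (ler_norm _) _; rewrite normrN normrM.
  by apply: ler_wpM2r.
move=> h1 h2. lra.
Qed.

Variable m : nat.
Hypothesis hm : (1 < m)%N.
Local Notation d := (spacing xL xH m).

Lemma d_ge0 : 0 <= d.
Proof. by rewrite /spacing divr_ge0 // subr_ge0 ltW. Qed.

Lemma d_end : (m.-1)%:R * d = xH - xL.
Proof.
rewrite /spacing mulrC divfK //; rewrite pnatr_eq0; case: m hm => [|[]] //.
Qed.

Lemma grid_sub : grid xL xH m `<=` Fset xL xH.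
Proof.
move=> _ [k /= km <-]; rewrite /Fset /=.
have k1 : (k%:R : R) <= (m.-1)%:R by rewrite ler_nat; case: m km hm => // n; rewrite ltnS.
have := d_ge0; have := d_end => h1 h2.
have h3 : k%:R * d <= (m.-1)%:R * d by apply: ler_wpM2r.
have h4 : 0 <= k%:R * d by apply: mulr_ge0.
apply/andP; split; lra.
Qed.

Lemma grid_xL : grid xL xH m xL.
Proof. by exists 0%N => /=; [case: m hm|rewrite mul0r addr0]. Qed.

Lemma grid_approx y : Fset xL xH y -> exists g, grid xL xH m g /\ `|g - y| <= d.
Proof.
move=> /andP[y1 y2].
suff H : forall n y, xL <= y <= xL + n%:R * d ->
    exists k, (k <= n)%N /\ `|xL + k%:R * d - y| <= d.
  have [|k [kn hk]] := H m.-1 y; first by rewrite d_end y1 /=; lra.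
  exists (xL + k%:R * d); split => //; exists k => //=.
  by case: m hm kn => // n _; rewrite ltnS.
elim => [|n IH] z /andP[z1 z2].
  exists 0%N; split => //; rewrite mul0r addr0.
  have -> : xL - z = 0 by rewrite mul0r addr0 in z2; lra.
  by rewrite normr0 d_ge0.
have [zn|zn] := leP z (xL + n%:R * d).
  by have [k [kn hk]] := IH z (introT andP (conj z1 zn)); exists k; split => //; apply: leqW.
exists n.+1; split => //.
have e : (n.+1)%:R * d = n%:R * d + d by rewrite -addn1 natrD mulrDl mul1r.
rewrite e in z2 *; rewrite ger0_norm; lra.
Qed.
Lemma work_mono t x :
  work (Fset xL xH) N c t x <= work (grid xL xH m) N c t x.
Proof.
elim: t x => [|t IH] x; first exact: lexx.
rewrite [X in _ <= X]workS; apply: lb_le_inf.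
  by exists (work (grid xL xH m) N c t xL + c t.+1 xL + N (x - xL)); exists xL => //; exact: grid_xL.
move=> _ [y Gy <-].
have hh := @work_elt (Fset xL xH) t x y (@subset_refl _ _) (@grid_sub y Gy). apply: le_trans hh _.
by rewrite lerD2r lerD2r.
Qed.

Lemma work_approx (G : R) : 0 <= G ->
  (forall t x y, Fset xL xH x -> Fset xL xH y -> c t x <= c t y + G * `|x - y|) ->
  forall t x, work (grid xL xH m) N c t x <=
     work (Fset xL xH) N c t x + t%:R * ((G + a + a) * d).
Proof.
move=> G0 hG; elim=> [|t IH] x; first by rewrite mul0r addr0.
rewrite (workS (Fset xL xH)) -lerBlDr; apply: lb_le_inf.
  by exists (work (Fset xL xH) N c t xL + c t.+1 xL + N (x - xL)); exists xL => //; exact: F_xL.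
move=> _ [y Fy <-]; rewrite lerBlDr.
have [g [Gg hg]] := grid_approx y Fy.
have h1 := @work_elt (grid xL xH m) t x g grid_sub Gg.
have h2 := IH g.
have h3 := @work_lip (Fset xL xH) t g y (@subset_refl _ _).
have h4 := hG t.+1 g y (@grid_sub g Gg) Fy.
have h5 := N_lip (x - g) (x - y).
have e5 : x - g - (x - y) = y - g by rewrite opprB addrC addrA subrK.
rewrite e5 distrC in h5.
have h6 : a * `|g - y| <= a * d by apply: ler_wpM2l => //; exact: a_ge0.
have h7 : G * `|g - y| <= G * d by apply: ler_wpM2l.
have e : t.+1%:R * ((G + a + a) * d) = t%:R * ((G + a + a) * d) + G * d + a * d + a * d.
  by rewrite -addn1 natrD mulrDl mul1r !mulrDl !addrA.
rewrite e; lra.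
Qed.
Hypothesis hxL : 0 <= xL.

Lemma NE z : 0 <= z -> N z = a * z.
Proof. by move=> z0 /=; rewrite (nrmE z) ger0_norm // mulrA mulrAC. Qed.

Lemma out_mono t r1 r2 u v : r1 < r2 ->
  is_output (Fset xL xH) N c r1 t u -> is_output (Fset xL xH) N c r2 t v -> v <= u.
Proof.
move=> r12 [Fu hu] [Fv hv].
have h1 := hu v Fv; have h2 := hv u Fu.
set Wu := work _ _ _ _ u in h1 h2; set Wv := work _ _ _ _ v in h1 h2.
set Nu := theta * nrm u in h1 h2; set Nv := theta * nrm v in h1 h2.
have h3 : (r2 - r1) * (Nv - Nu) <= 0.
  have -> : (r2 - r1) * (Nv - Nu) = (r2 * Nv + r1 * Nu) - (r1 * Nv + r2 * Nu).
    by ring.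
  rewrite subr_le0.
  move: h1 h2; clearbody Wu Wv Nu Nv; move: (r1 * Nu) (r1 * Nv) (r2 * Nu) (r2 * Nv) => p1 p2 p3 p4; lra.
rewrite pmulr_rle0 ?subr_gt0 // subr_le0 /Nu /Nv in h3.
move: Fu Fv h3 => /andP[u0 _] /andP[v0 _].
rewrite (NE u) ?(NE v); [|exact: le_trans hxL v0|exact: le_trans hxL u0].
by rewrite ler_pM2l // mulr_gt0 ?nrm1_gt0 //; apply: lt_le_trans ltr01 ht.
Qed.

Definition Bset t (q : rat) := [set r : R | exists z1 z2, z1 < ratr q < z2 /\
   is_output (Fset xL xH) N c r t z1 /\ is_output (Fset xL xH) N c r t z2].

Lemma Bset_uniq t q r1 r2 : Bset t q r1 -> Bset t q r2 -> r1 = r2.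
Proof.
wlog: r1 r2 / r1 <= r2.
  move=> W h1 h2; have [r12|r21] := leP r1 r2; first exact: W.
  by apply/esym/W => //; apply: ltW.
rewrite le_eqVlt => /orP[/eqP//|r12].
move=> [u1 [u2 [hu [Ho1 Ho2]]]] [v1 [v2 [hv [Ho3 Ho4]]]].
move/andP: hu => [u1q qu2]; move/andP: hv => [v1q qv2].
have := @out_mono t r1 r2 u1 v2 r12 Ho1 Ho4; lra.
Qed.

Lemma Bset_countable t q : countable (Bset t q).
Proof.
have [[r0 Br0]|e] := pselect (Bset t q !=set0).
  apply: (sub_countable _ (countable1 r0)); apply: subset_card_le => r Br.
  by rewrite /= (@Bset_uniq t q r r0 Br Br0).
have -> : Bset t q = set0 by apply/seteqP; split=> z // Sz; apply: e; exists z.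
exact: countable0.
Qed.

Definition Bad := \bigcup_(p in [set: (nat * rat)%type]) Bset p.1 p.2.

Lemma Bad_countable : countable Bad.
Proof.
apply: bigcup_countable => // p _; exact: Bset_countable.
Qed.

Lemma Bad_negligible : (@lebesgue_measure R).-negligible Bad.
Proof.
exists Bad; split => //.
  by apply: countable_measurable; [move=> z; exact: measurable_set1|exact: Bad_countable].
exact/countable_lebesgue_measure0/Bad_countable.
Qed.

Lemma good_uniq r t z1 z2 : ~ Bad r ->
  is_output (Fset xL xH) N c r t z1 -> is_output (Fset xL xH) N c r t z2 -> z1 = z2.
Proof.
move=> nB.
wlog: z1 z2 / z1 <= z2.
  move=> W h1 h2; have [r12|r21] := leP z1 z2; first exact: W.
  by apply/esym/W => //; apply: ltW.
rewrite le_eqVlt => /orP[/eqP//|z12] Ho1 Ho2.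
have [q hq] := rat_in_itvoo z12.
exfalso; apply: nB; exists (t, q) => //=; exists z1, z2; split => //.
Qed.
End S.

Section G.
Variable R : realType.

Lemma lip_cont (f : R -> R) (L : R) : 0 <= L ->
  (forall x y, f x <= f y + L * `|x - y|) -> continuous f.
Proof.
move=> L0 hf x; apply/cvgrPdist_le => e e0.
have L1 : 0 < L + 1 by apply: (le_lt_trans L0); rewrite ltrDl ltr01.
have e1 : 0 < e / (L + 1) by rewrite divr_gt0.
near=> y.
have hy : `|x - y| <= e / (L + 1) by near: y; apply: cvgr_dist_le => //.
have h1 := hf x y; have h2 := hf y x; rewrite distrC in h2.
have h3 : L * `|x - y| <= e.
  apply: le_trans (_ : (L + 1) * `|x - y| <= e).
    by rewrite mulrDl mul1r lerDl normr_ge0.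
  by rewrite mulrC -ler_pdivlMr.
move: h1 h2 h3; move: (L * `|x - y|) => p h1 h2 h3.
rewrite ler_norml; apply/andP; split; lra.
Unshelve. all: by end_near.
Qed.
Lemma gap_side (Y : R -> R) xs u v : continuous Y ->
  (forall z, u <= z <= v -> Y xs <= Y z /\ (Y z <= Y xs -> z = xs)) ->
  (xs < u \/ v < xs) ->
  exists2 eta, 0 < eta & forall z, u <= z <= v -> Y xs + eta <= Y z.
Proof.
move=> cY hY hxs; have [uv|vu] := leP u v; last first.
  by exists 1 => // z /andP[z1 z2]; lra.
have [c0 c0in c0min] := EVT_min uv (continuous_subspaceT cY).
move: c0in; rewrite in_itv /= => c0uv.
have [h1 h2] := hY c0 c0uv.
have nc : c0 != xs.
  apply/eqP => e; move: c0uv; rewrite e => /andP[? ?]; case: hxs; lra.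
have lt : Y xs < Y c0.
  rewrite lt_neqAle h1 andbT; apply/eqP => e.
  by move/eqP: nc; apply; apply: h2; rewrite e.
exists (Y c0 - Y xs); first by rewrite subr_gt0.
move=> z zuv; have := c0min z; rewrite in_itv /= => /(_ zuv); lra.
Qed.

Lemma gap (Y : R -> R) lo hi xs e : continuous Y -> 0 < e -> lo <= xs <= hi ->
  (forall z, lo <= z <= hi -> Y xs <= Y z /\ (Y z <= Y xs -> z = xs)) ->
  exists2 eta, 0 < eta & forall z, lo <= z <= hi -> e <= `|z - xs| -> Y xs + eta <= Y z.
Proof.
move=> cY e0 /andP[l1 l2] hY.
have [e1 pe1 h1] := @gap_side Y xs lo (xs - e) cY
  (fun z hz => hY z (ltac:(move/andP: hz => [? ?]; apply/andP; split; lra)))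
  (ltac:(right; lra)).
have [e2 pe2 h2] := @gap_side Y xs (xs + e) hi cY
  (fun z hz => hY z (ltac:(move/andP: hz => [? ?]; apply/andP; split; lra)))
  (ltac:(left; lra)).
exists (Num.min e1 e2); first by rewrite lt_min pe1 pe2.
move=> z /andP[z1 z2] ez.
have m1 : Num.min e1 e2 <= e1 by rewrite ge_min lexx.
have m2 : Num.min e1 e2 <= e2 by rewrite ge_min lexx orbT.
have [zx|zx] := leP z xs.
  rewrite distrC ger0_norm ?subr_ge0 // in ez.
  have := h1 z (ltac:(apply/andP; split; lra)); lra.
rewrite gtr0_norm ?subr_gt0 // in ez.
have := h2 z (ltac:(apply/andP; split; lra)); lra.
Qed.
End G.


Lemma rN_lip (R : realType) (nrm : R -> R) (theta : R) : is_norm nrm -> 1 <= theta ->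
  forall r x y : R, `|r| <= 1 -> r * (theta * nrm x) <= r * (theta * nrm y) + theta * nrm 1 * `|x - y|.
Proof.
move=> hn ht r x y hr; have h := @N_lip_abs R nrm theta hn ht x y.
rewrite -lerBlDl -mulrBr; apply: le_trans (ler_norm _) _; rewrite normrM.
apply: le_trans (ler_wpM2r (normr_ge0 _) hr) _; rewrite mul1r; exact: h.
Qed.

Theorem lemma11 (R : realType) (xL xH : R) (nrm : R -> R) (theta : R)
  (c : nat -> R -> R) (m : nat -> nat) :
  0 <= xL -> xL < xH ->
  is_norm nrm -> 1 <= theta ->
  (forall t x, Fset xL xH x -> 0 <= c t x) ->
  (forall t, convex_on (Fset xL xH) (c t)) ->
  unif_bounded_subgrad (Fset xL xH) c ->
  (forall i, (2 <= m i)%N) ->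
  (fun i => spacing xL xH (m i)) @ \oo --> (0 : R) ->
  {ae (@lebesgue_measure R), forall r : R, r \in `]-1, 1[ ->
    forall (xd : nat -> nat -> R) (xc : nat -> R),
      (forall i t, (0 < t)%N ->
         is_output (grid xL xH (m i)) (fun x => theta * nrm x) c r t (xd i t)) ->
      (forall t, (0 < t)%N ->
         is_output (Fset xL xH) (fun x => theta * nrm x) c r t (xc t)) ->
      forall t, (0 < t)%N ->
        (fun i => `|xd i t - xc t|) @ \oo --> (0 : R)}.
Proof.
move=> hxL hLH hn ht hc0 _ hsub hm hd.
have [G [G0 hG]] := @c_lip R xL xH c hLH hsub.
apply: (negligibleS _ (@Bad_negligible R nrm theta hn ht xL xH c hxL)).
move=> r /=; apply: contra_notP => nB.
move=> rin xd xc hxd hxc t t0.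
have r1 : `|r| <= 1.
  move: rin; rewrite in_itv /= => /andP[h1 h2]; rewrite ler_norml; apply/andP; split; apply: ltW => //.
set a := theta * nrm 1.
have a0 : 0 <= a by apply: mulr_ge0; [exact: le_trans ler01 ht|case: hn].
set Y := fun z => work (Fset xL xH) (fun x => theta * nrm x) c t.-1 z + r * (theta * nrm z).
have [Fxs hxs] := hxc t t0.
set xs := xc t in Fxs hxs *.
have Ylip : forall x y, Y x <= Y y + (a + a) * `|x - y|.
  move=> x y; have h1 := @work_lip R nrm theta hn ht xL xH c hc0 (Fset xL xH) t.-1 x y (@subset_refl _ _).
  have h2 := @rN_lip R nrm theta hn ht r x y r1.
  rewrite /Y mulrDl; move: h1 h2; rewrite -/a.
  move: (a * `|x - y|) (r * (theta * nrm x)) (r * (theta * nrm y)) => p q1 q2.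
  move: (work _ _ _ _ x) (work _ _ _ _ y) => w1 w2; lra.
have Ycont : continuous Y := @lip_cont R Y (a + a) (addr_ge0 a0 a0) Ylip.
have hY : forall z, xL <= z <= xH -> Y xs <= Y z /\ (Y z <= Y xs -> z = xs).
  move=> z hz; split; first exact: hxs.
  move=> hzx; apply: (@good_uniq R nrm theta xL xH c r t z xs nB) => //.
  split => // w Fw; apply: le_trans hzx _; exact: hxs.

apply/cvgrPdist_lt => e e0.
have [eta eta0 heta] := @gap R Y xL xH xs e Ycont e0 Fxs hY.
set K := (t.-1)%:R * (G + a + a) + a + a.
have K0 : 0 <= K by rewrite /K; apply: addr_ge0; [apply: addr_ge0; [apply: mulr_ge0 => //; apply: addr_ge0 => //; exact: addr_ge0|]|].
have K1 : 0 < K + 1 by apply: (le_lt_trans K0); rewrite ltrDl ltr01.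
have hK : \forall i \near \oo, K * spacing xL xH (m i) < eta.
  have hh : \forall i \near \oo, `|0 - spacing xL xH (m i)| < eta / (K + 1).
    by apply: cvgr_dist_lt => //; exact: divr_gt0.
  move: hh; apply: filterS => i.
  rewrite sub0r normrN => hi.
  have d0 := @d_ge0 R xL xH hLH (m i).
  rewrite ger0_norm // in hi.
  apply: le_lt_trans (_ : (K + 1) * spacing xL xH (m i) < eta).
    by apply: ler_wpM2r => //; rewrite lerDl ler01.
  by rewrite mulrC -ltr_pdivlMr.

move: hK; apply: filterS => i hi.
rewrite sub0r normrN normr_id.
set d := spacing xL xH (m i) in hi *.
have [g [Gg hg]] := @grid_approx R xL xH hLH (m i) (hm i) xs Fxs.
have [Gx hx] := hxd i t t0.
have e1 := hx g Gg.
have e2 := @work_mono R nrm theta hn ht xL xH c hc0 hLH (m i) (hm i) t.-1 (xd i t).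
have e3 := @work_approx R nrm theta hn ht xL xH c hc0 hLH (m i) (hm i) G G0 hG t.-1 g.
have e4 := @work_lip R nrm theta hn ht xL xH c hc0 (Fset xL xH) t.-1 g xs (@subset_refl _ _).
have e5 := @rN_lip R nrm theta hn ht r g xs r1.
have e6 : a * `|g - xs| <= a * d by apply: ler_wpM2l.
have eK : K * d = (t.-1)%:R * ((G + a + a) * d) + a * d + a * d.
  by rewrite /K; ring.

have hYx : Y (xd i t) <= Y xs + K * d.
  rewrite /Y eK; rewrite -/a in e4 e5 e3.
  move: e1 e2 e3 e4 e5 e6 hi.
  move: (K * d) ((t.-1)%:R * ((G + a + a) * d)) (a * d) (a * `|g - xs|) => k1 k2 k3 k4.
  move: (r * (theta * nrm g)) (r * (theta * nrm xs)) (r * (theta * nrm (xd i t))) => s1 s2 s3.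
  move: (work _ _ _ _ g) (work _ _ _ _ xs) (work _ _ _ _ (xd i t)) => w1 w2 w3.
  move: (work _ _ _ _ g) (work _ _ _ _ (xd i t)) => u1 u3.
  lra.

rewrite ltNge; apply/negP => he.
have := heta (xd i t) (@grid_sub R xL xH hLH (m i) (hm i) _ Gx) he.
move: hYx hi; move: (Y xs) (Y (xd i t)) (K * d) => y1 y2 k; lra.
Qed.
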